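(* Let $n=n_1+\dots+n_m$ with each $n_i\in\{1,2,3\}$, partition $[n]$ into disjoint blocks $B_1,\dots,B_m$ with $|B_i|=n_i$, and let $f(S)=\sum_{i=1}^m f_i(S\cap B_i)$ where each $f_i:2^{B_i}\to\mathbb{R}_+$ is monotone submodular. Then $f^{+}(\mathbf{x})/f^{++}(\mathbf{x})\le4/3$ for all $\mathbf{x}\in[0,1]^n$ (with the convention $0/0=1$).
   Context: $[n]=\{1,\dots,n\}$. A set function $f:2^{V}\to\mathbb{R}_+$ is monotone if $f(S)\le f(T)$ for $S\subseteq T$, submodular if $f(S)+f(T)\ge f(S\cap T)+f(S\cup T)$. For $\mathbf{x}\in[0,1]^n$: the concave closure $f^{+}(\mathbf{x})=\max\sum_{S\subseteq[n]}\theta(S)f(S)$ over $\theta:2^{[n]}\to\mathbb{R}_{\ge0}$ with $\sum_S\theta(S)=1$ and $\sum_{S\ni i}\theta(S)=x_i$ for all $i$; the upper pairwise independent extension $f^{++}(\mathbf{x})$ is the same maximum with the additional constraints $\sum_{S\ni i,j}\theta(S)=x_ix_j$ for all $i<j$. *)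

(* Defs.v *)
From HB Require Import structures.
From mathcomp Require Import all_boot all_order all_algebra.
From mathcomp Require Import classical_sets reals.
Set Implicit Arguments. Unset Strict Implicit. Unset Printing Implicit Defensive.
Import Order.TTheory GRing.Theory Num.Theory.
Local Open Scope ring_scope.
Local Open Scope classical_set_scope.

Section Ext.
Variables (R : realType) (n : nat).

Definition marg_feasible (x : 'I_n -> R) (theta : {ffun {set 'I_n} -> R}) : Prop :=
  (forall S : {set 'I_n}, 0 <= theta S) /\ (\sum_(S : {set 'I_n}) theta S = 1) /\
  (forall i : 'I_n, \sum_(S : {set 'I_n} | i \in S) theta S = x i).

Definition pair_feasible (x : 'I_n -> R) (theta : {ffun {set 'I_n} -> R}) : Prop :=
  marg_feasible x theta /\
  (forall i j : 'I_n, (i < j)%N -> \sum_(S : {set 'I_n} | (i \in S) && (j \in S)) theta S = x i * x j).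

Definition concave_closure (f : {set 'I_n} -> R) (x : 'I_n -> R) : R :=
  sup [set v | exists theta, marg_feasible x theta /\ v = \sum_(S : {set 'I_n}) theta S * f S].

Definition upper_pairwise_ext (f : {set 'I_n} -> R) (x : 'I_n -> R) : R :=
  sup [set v | exists theta, pair_feasible x theta /\ v = \sum_(S : {set 'I_n}) theta S * f S].

Definition mono_submod_on (B : {set 'I_n}) (f : {set 'I_n} -> R) : Prop :=
  (forall S : {set 'I_n}, S \subset B -> 0 <= f S) /\
  (forall S T : {set 'I_n}, S \subset B -> T \subset B -> S \subset T -> f S <= f T) /\
  (forall S T : {set 'I_n}, S \subset B -> T \subset B -> f (S :&: T) + f (S :|: T) <= f S + f T).

End Ext.

Definition block (n m : nat) (blk : 'I_n -> 'I_m) (i : 'I_m) : {set 'I_n} :=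
  [set j | blk j == i].

(* Main.v *)
Require Import Defs.
From HB Require Import structures.
From mathcomp Require Import all_boot all_order all_algebra.
From mathcomp Require Import classical_sets reals.
From mathcomp Require Import ring lra.
From mathcomp Require Import fintype finset.
From mathcomp Require Import zify.
Import Order.TTheory GRing.Theory Num.Theory.
Set Implicit Arguments. Unset Strict Implicit. Unset Printing Implicit Defensive.
Local Open Scope ring_scope.
Lemma EL (R : realType) (n : nat) (B : {set 'I_n}) (h : 'I_n -> bool -> R) :
  \sum_(T : {set 'I_n} | T \subset B) \prod_(j in B) h j (j \in T) =
  \prod_(j in B) (h j true + h j false).
Proof.
transitivity (\prod_j ((if j \in B then h j true else 0) +
                       (if j \in B then h j false else 1))); last first.
  by rewrite [RHS]big_mkcond; apply: eq_bigr => j _; case: (j \in B); rewrite ?addr0 ?add0r.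
transitivity (\sum_(J : {set 'I_n}) \prod_j (if j \in J then (if j \in B then h j true else 0)
                       else (if j \in B then h j false else 1))); last first.
  by rewrite bigA_distr.
rewrite [RHS](bigID (fun J : {set 'I_n} => J \subset B)) /=.
rewrite [X in _ = _ + X]big1 ?addr0; last first.
  move=> J /subsetPn [j jJ jnB]; rewrite (bigD1 j) //= jJ (negbTE jnB) mul0r //.
apply: eq_big => // J sJB; rewrite [LHS]big_mkcond; apply: eq_bigr => j _.
case jB: (j \in B); case jJ: (j \in J) => //.
by move: (fintype.subsetP sJB j jJ); rewrite jB.
Qed.

Lemma prod_blocks (R : realType) (n m : nat) (blk : 'I_n -> 'I_m)
  (G : 'I_m -> {set 'I_n} -> R) :
  \sum_(S : {set 'I_n}) \prod_(k < m) G k (S :&: block blk k) =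
  \prod_(k < m) \sum_(T : {set 'I_n} | T \subset block blk k) G k T.
Proof.
transitivity (\prod_(k < m) \sum_(T : {set 'I_n})
   (if T \subset block blk k then G k T else 0)); last first.
  by apply: eq_bigr => k _; rewrite [RHS]big_mkcond.
transitivity (\sum_(phi : {ffun 'I_m -> {set 'I_n}}) \prod_(k < m)
   (if phi k \subset block blk k then G k (phi k) else 0)); last first.
  by rewrite bigA_distr_bigA.
rewrite [RHS](bigID (fun phi : {ffun 'I_m -> {set 'I_n}} =>
                         [forall k, phi k \subset block blk k])) /=.
rewrite [X in _ = _ + X]big1 ?addr0; last first.
  move=> phi /forallPn [k hk]; rewrite (bigD1 k) //= (negbTE hk) mul0r //.
rewrite (reindex_onto (fun S : {set 'I_n} => [ffun k => S :&: block blk k])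
                      (fun phi : {ffun 'I_m -> {set 'I_n}} => \bigcup_(l < m) phi l)).
  apply: eq_big => [S|S _].
    have -> : [forall k, [ffun k => S :&: block blk k] k \subset block blk k].
      by apply/forallP => k; rewrite ffunE subsetIr.
    rewrite /=; apply/esym/eqP/setP => j; apply/bigcupP/idP => [[l _]|jS].
      by rewrite ffunE inE => /andP[].
    by exists (blk j) => //; rewrite ffunE !inE jS /=.
  by apply: eq_bigr => k _; rewrite ffunE subsetIr.
move=> phi /forallP hphi; apply/ffunP => k; rewrite ffunE; apply/setP => j.
rewrite inE; apply/andP/idP => [[/bigcupP [l _ jl] jk]|jk].
  have := fintype.subsetP (hphi l) j jl; rewrite /block !inE => /eqP hl.
  by move: jk; rewrite /block !inE hl => /eqP hlk; rewrite -hlk.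
split; first by apply/bigcupP; exists k.
exact: (fintype.subsetP (hphi k) j jk).
Qed.

Definition pr (R : realType) (n : nat) (x : 'I_n -> R) (j : 'I_n) (b : bool) : R :=
  if b then x j else 1 - x j.
Definition sg (R : realType) (b : bool) : R := if b then 1 else -1.
Definition gB (R : realType) (n : nat) (x : 'I_n -> R) (t : R) (B T : {set 'I_n}) : R :=
  \prod_(j in B) pr x j (j \in T) + t * \prod_(j in B) sg R (j \in T).
Definition ind (R : realType) (n : nat) (L T : {set 'I_n}) : R :=
  \prod_(l in L) ((l \in T)%:R : R).

Lemma indB (R : realType) (n : nat) (L B T : {set 'I_n}) : L \subset B ->
  ind R L T = \prod_(j in B) (if j \in L then (j \in T)%:R else 1).
Proof.
move=> sLB; rewrite /ind -big_mkcondr; apply: eq_bigl => j.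
by case jL: (j \in L); rewrite ?andbF ?andbT // (fintype.subsetP sLB j jL).
Qed.

Lemma BS (R : realType) (n : nat) (x : 'I_n -> R) (t : R) (L B : {set 'I_n}) :
  L \subset B ->
  \sum_(T : {set 'I_n} | T \subset B) gB x t B T * ind R L T =
  \prod_(l in L) x l + t * (B \subset L)%:R.
Proof.
move=> sLB.
pose phi j (b : bool) : R := if j \in L then b%:R else 1.
transitivity (\sum_(T : {set 'I_n} | T \subset B)
   (\prod_(j in B) (pr x j (j \in T) * phi j (j \in T)) +
    t * \prod_(j in B) (sg R (j \in T) * phi j (j \in T)))).
  apply: eq_bigr => T _; rewrite (@indB R n L B T sLB) /gB mulrDl -mulrA -!big_split //.
rewrite big_split /= -mulr_sumr (EL B (fun j b => pr x j b * phi j b)) (EL B (fun j b => sg R b * phi j b)); congr (_ + _ * _).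
  have -> : \prod_(l in L) x l = \prod_(l in B | l \in L) x l.
    by apply: eq_bigl => j; case jL: (j \in L); rewrite ?andbF ?andbT // (fintype.subsetP sLB j jL).
  rewrite big_mkcondr /=; apply: eq_bigr => j _; rewrite /pr /phi.
  by case: (j \in L) => /=; ring.
case: (boolP (B \subset L)) => sBL.
  rewrite big1 // => j jB; rewrite /phi (fintype.subsetP sBL j jB) /sg /=; ring.
have [j jB jnL] := subsetPn sBL.
by rewrite (bigD1 j) //= /phi (negbTE jnL) /sg /= mulr1 mulN1r subrr mul0r.
Qed.

Definition block_good (R : realType) (n : nat) (x : 'I_n -> R) (B : {set 'I_n})
  (f : {set 'I_n} -> R) (t : R) : Prop :=
  ((#|B| < 3)%N -> t = 0) /\ (forall T : {set 'I_n}, T \subset B -> 0 <= gB x t B T) /\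
  (forall theta : {ffun {set 'I_n} -> R}, marg_feasible x theta ->
     \sum_(S : {set 'I_n}) theta S * f (S :&: B) <=
     4 / 3 * \sum_(T : {set 'I_n} | T \subset B) gB x t B T * f T).

Lemma gsum1 (R : realType) (n : nat) (x : 'I_n -> R) (t : R) (B : {set 'I_n}) :
  (0 < #|B|)%N -> \sum_(T : {set 'I_n} | T \subset B) gB x t B T = 1.
Proof.
move=> hB.
have h0 : (B \subset set0) = false.
  by apply/negbTE; apply: contraTN hB; rewrite subset0 => /eqP ->; rewrite cards0.
have := BS x t (sub0set B); rewrite big_set0 h0 mulr0 addr0 => <-; apply: eq_bigr => T _.
by rewrite /ind big_set0 mulr1.
Qed.

Lemma ind_blocks (R : realType) (n m : nat) (blk : 'I_n -> 'I_m) (L S : {set 'I_n}) :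
  ind R L S = \prod_(k < m) ind R (L :&: block blk k) (S :&: block blk k).
Proof.
rewrite /ind (partition_big blk xpredT) //=; apply: eq_bigr => k _.
apply: eq_big => [l|l]; first by rewrite /block !inE.
by rewrite /block !inE => /andP[_ /eqP ->]; rewrite eqxx andbT.
Qed.

Lemma prodx_blocks (R : realType) (n m : nat) (blk : 'I_n -> 'I_m) (x : 'I_n -> R) (L : {set 'I_n}) :
  \prod_(l in L) x l = \prod_(k < m) \prod_(l in L :&: block blk k) x l.
Proof.
rewrite (partition_big blk xpredT) //=; apply: eq_bigr => k _.
by apply: eq_bigl => l; rewrite /block !inE.
Qed.
Lemma P2 (R : realType) (a b : R) : 0 <= a <= 1 -> 0 <= b <= 1 ->
  3/4 * (if a + b <= 1 then a + b else 1) <= a + b - a * b.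
Proof.
move=> /andP[a0 a1] /andP[b0 b1]; case: ifP => h.
  have h1 : 0 <= (a - b) * (a - b) by rewrite -expr2 sqr_ge0.
  have h2 : 0 <= (a + b) * (1 - (a + b)) by apply: mulr_ge0; lra.
  nra.
move/negbT: h; rewrite -ltNge => h.
have h1 : 0 <= ((1 - a) - (1 - b)) * ((1 - a) - (1 - b)) by rewrite -expr2 sqr_ge0.
have h2 : 0 <= ((1 - a) + (1 - b)) * (1 - ((1 - a) + (1 - b))) by apply: mulr_ge0; lra.
nra.
Qed.

Lemma P3 (R : realType) (a b c : R) : 0 <= a <= 1 -> 0 <= b <= 1 -> 0 <= c <= 1 ->
  3/4 * (if a + b + c <= 1 then a + b + c else 1) <=
  1 - (1 - a) * ((1 - b) * (1 - c)) +
  Num.min (Num.min (Num.min ((1 - a) * ((1 - b) * (1 - c))) (a * (b * (1 - c))))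
            (a * ((1 - b) * c))) ((1 - a) * (b * c)).
Proof.
move=> /andP[a0 a1] /andP[b0 b1] /andP[c0 c1].
rewrite -lerBlDl !le_min; case: ifP => h.
  rewrite -!andbA; apply/and4P; split.
  - lra.
  - have e : (1 - a) * ((1 - b) * (1 - c)) - a * (b * (1 - c)) = (1 - c) * (1 - (a + b)) by ring.
    have h1 : 0 <= ((a + b) - c) * ((a + b) - c) by rewrite -expr2 sqr_ge0.
    have h2 : 0 <= ((a + b) + c) * (1 - ((a + b) + c)) by apply: mulr_ge0; lra.
    nra.
  - have e : (1 - a) * ((1 - b) * (1 - c)) - a * ((1 - b) * c) = (1 - b) * (1 - (a + c)) by ring.
    have h1 : 0 <= ((a + c) - b) * ((a + c) - b) by rewrite -expr2 sqr_ge0.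
    have h2 : 0 <= ((a + c) + b) * (1 - ((a + c) + b)) by apply: mulr_ge0; lra.
    nra.
  - have e : (1 - a) * ((1 - b) * (1 - c)) - (1 - a) * (b * c) = (1 - a) * (1 - (b + c)) by ring.
    have h1 : 0 <= ((b + c) - a) * ((b + c) - a) by rewrite -expr2 sqr_ge0.
    have h2 : 0 <= ((b + c) + a) * (1 - ((b + c) + a)) by apply: mulr_ge0; lra.
    nra.
move/negbT: h; rewrite -ltNge => h.
rewrite -!andbA; apply/and4P; split.
- lra.
- have e : (1 - a) * ((1 - b) * (1 - c)) - a * (b * (1 - c)) = (1 - c) * (1 - (a + b)) by ring.
  have h1 : 0 <= ((1 - c) - (1 - (a + b))) * ((1 - c) - (1 - (a + b))) by rewrite -expr2 sqr_ge0.
  case: (lerP (a + b) 1) => hu; nra.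
- have e : (1 - a) * ((1 - b) * (1 - c)) - a * ((1 - b) * c) = (1 - b) * (1 - (a + c)) by ring.
  have h1 : 0 <= ((1 - b) - (1 - (a + c))) * ((1 - b) - (1 - (a + c))) by rewrite -expr2 sqr_ge0.
  case: (lerP (a + c) 1) => hu; nra.
- have e : (1 - a) * ((1 - b) * (1 - c)) - (1 - a) * (b * c) = (1 - a) * (1 - (b + c)) by ring.
  have h1 : 0 <= ((1 - a) - (1 - (b + c))) * ((1 - a) - (1 - (b + c))) by rewrite -expr2 sqr_ge0.
  case: (lerP (b + c) 1) => hu; nra.
Qed.

Lemma PR (R : realType) (a b c : R) : 0 <= a <= 1 -> 0 <= b <= 1 -> 0 <= c <= 1 ->
  3/4 * (if a + b + c <= 2 then a + b + c else 2) <=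
  a + b + c - a * (b * c) +
  Num.min (Num.min (Num.min (a * (b * c)) (a * ((1 - b) * (1 - c))))
            ((1 - a) * (b * (1 - c)))) ((1 - a) * ((1 - b) * c)).
Proof.
move=> /andP[a0 a1] /andP[b0 b1] /andP[c0 c1].
rewrite -lerBlDl !le_min; case: ifP => h.
  rewrite -!andbA; apply/and4P; split.
  - nra.
  - nra.
  - nra.
  - nra.
move/negbT: h; rewrite -ltNge => h.
rewrite -!andbA; apply/and4P; split.
- nra.
- nra.
- nra.
- nra.
Qed.

Section Expect.
Variables (R : realType) (n : nat) (x : 'I_n -> R) (theta : {ffun {set 'I_n} -> R}).
Hypothesis hth : marg_feasible x theta.

Lemma E_const k : \sum_(S : {set 'I_n}) theta S * k = k.
Proof. by case: hth => _ [h1 _]; rewrite -mulr_suml h1 mul1r. Qed.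

Lemma E_u j : \sum_(S : {set 'I_n}) theta S * (j \in S)%:R = x j.
Proof.
case: hth => _ [_ h2]; rewrite -h2 [RHS]big_mkcond; apply: eq_bigr => S _.
by case: (j \in S); rewrite ?mulr1 ?mulr0.
Qed.

Lemma E_ku k j : \sum_(S : {set 'I_n}) theta S * (k * (j \in S)%:R) = k * x j.
Proof. by under eq_bigr do rewrite mulrCA; rewrite -mulr_sumr E_u. Qed.

Lemma E_kM2 k (cnd : bool) i j :
  \sum_(S : {set 'I_n}) theta S * (k * (if cnd then (i \in S)%:R + (j \in S)%:R else 1)) =
  k * (if cnd then x i + x j else 1).
Proof.
under eq_bigr do rewrite mulrCA; rewrite -mulr_sumr; congr (_ * _).
case: cnd; last exact: E_const.
by under eq_bigr do rewrite mulrDr; rewrite big_split /= !E_u.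
Qed.

Lemma E_kM3 k (cnd : bool) i j l K :
  \sum_(S : {set 'I_n}) theta S *
     (k * (if cnd then (i \in S)%:R + (j \in S)%:R + (l \in S)%:R else K)) =
  k * (if cnd then x i + x j + x l else K).
Proof.
under eq_bigr do rewrite mulrCA; rewrite -mulr_sumr; congr (_ * _).
case: cnd; last exact: E_const.
by under eq_bigr do rewrite !mulrDr; rewrite !big_split /= !E_u.
Qed.

Lemma E_mono (h h' : {set 'I_n} -> R) : (forall S, h S <= h' S) ->
  \sum_(S : {set 'I_n}) theta S * h S <= \sum_(S : {set 'I_n}) theta S * h' S.
Proof.
case: hth => h0 _ hh; apply: ler_sum => S _; by rewrite ler_wpM2l.
Qed.

End Expect.

Lemma G3 (R : realType) (n : nat) (x : 'I_n -> R) (t : R) (L B : {set 'I_n}) k :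
  L \subset B ->
  \sum_(T : {set 'I_n} | T \subset B) gB x t B T * (k * ind R L T) =
  k * (\prod_(l in L) x l + t * (B \subset L)%:R).
Proof.
move=> sLB; rewrite (eq_bigr (fun T => k * (gB x t B T * ind R L T))); last first.
  by move=> T _; rewrite mulrCA.
by rewrite -mulr_sumr BS.
Qed.

Lemma or2_le (R : realType) (p q cnd : bool) :
  (p%:R + q%:R - p%:R * q%:R : R) <= if cnd then p%:R + q%:R else 1.
Proof. by case: p; case: q; case: cnd => /=; lra. Qed.

Lemma or3_le (R : realType) (p q r cnd : bool) :
  (p%:R + q%:R + r%:R - p%:R * q%:R - p%:R * r%:R - q%:R * r%:R + p%:R * (q%:R * r%:R) : R)
  <= if cnd then p%:R + q%:R + r%:R else 1.
Proof. by case: p; case: q; case: r; case: cnd => /=; lra. Qed.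

Lemma r_le (R : realType) (p q r cnd : bool) :
  (p%:R + q%:R + r%:R - p%:R * (q%:R * r%:R) : R)
  <= if cnd then p%:R + q%:R + r%:R else 2.
Proof. by case: p; case: q; case: r; case: cnd => /=; lra. Qed.

Lemma final_neg (R : realType) (F0 Fa Fb Fc Fab Fac Fbc Fabc xa xb xc dM mab mac mbc m3 : R) :
  0 <= F0 ->
  - (Fab - Fa - Fb + F0) * (3/4 * mab) <= - (Fab - Fa - Fb + F0) * (xa + xb - xa * xb) ->
  - (Fac - Fa - Fc + F0) * (3/4 * mac) <= - (Fac - Fa - Fc + F0) * (xa + xc - xa * xc) ->
  - (Fbc - Fb - Fc + F0) * (3/4 * mbc) <= - (Fbc - Fb - Fc + F0) * (xb + xc - xb * xc) ->
  - (Fabc - Fab - Fac - Fbc + Fa + Fb + Fc - F0) * (3/4 * m3) <=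
  - (Fabc - Fab - Fac - Fbc + Fa + Fb + Fc - F0) * (xa + xb + xc - xa * (xb * xc) + dM) ->
  0 <= (Fabc - Fbc) * xa -> 0 <= (Fabc - Fac) * xb -> 0 <= (Fabc - Fab) * xc ->
  F0 + (Fabc - Fbc) * xa + (Fabc - Fac) * xb + (Fabc - Fab) * xc +
  - (Fab - Fa - Fb + F0) * mab + - (Fac - Fa - Fc + F0) * mac + - (Fbc - Fb - Fc + F0) * mbc
   + - (Fabc - Fab - Fac - Fbc + Fa + Fb + Fc - F0) * m3 <=
  4/3 * (F0 + (Fa - F0) * xa + (Fb - F0) * xb + (Fc - F0) * xc + (Fab - Fa - Fb + F0) * (xa * xb)
    + (Fac - Fa - Fc + F0) * (xa * xc) + (Fbc - Fb - Fc + F0) * (xb * xc) +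
    (Fabc - Fab - Fac - Fbc + Fa + Fb + Fc - F0) * (xa * (xb * xc) + - dM)).
Proof. move=> *; lra. Qed.

Section Three.
Variables (R : realType) (n : nat) (a b c : 'I_n).
Hypotheses (hab : a != b) (hac : a != c) (hbc : b != c).

Definition mk (p q r : bool) : {set 'I_n} :=
  [set j | ((j == a) && p) || ((j == b) && q) || ((j == c) && r)].
Definition B3 : {set 'I_n} := a |: (b |: [set c]).

Let eab : (a == b) = false. Proof. exact: negbTE hab. Qed.
Let eac : (a == c) = false. Proof. exact: negbTE hac. Qed.
Let ebc : (b == c) = false. Proof. exact: negbTE hbc. Qed.
Let eba : (b == a) = false. Proof. by rewrite eq_sym. Qed.
Let eca : (c == a) = false. Proof. by rewrite eq_sym. Qed.
Let ecb : (c == b) = false. Proof. by rewrite eq_sym. Qed.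

Lemma mem_mka p q r : (a \in mk p q r) = p.
Proof. by rewrite inE eqxx eab eac; case: p. Qed.
Lemma mem_mkb p q r : (b \in mk p q r) = q.
Proof. by rewrite inE eqxx eba ebc; case: q. Qed.
Lemma mem_mkc p q r : (c \in mk p q r) = r.
Proof. by rewrite inE eqxx eca ecb; case: r; rewrite ?orbT ?orbF. Qed.

Lemma mem_mk_other j p q r : j != a -> j != b -> j != c -> (j \in mk p q r) = false.
Proof. by move=> /negbTE ja /negbTE jb /negbTE jc; rewrite inE ja jb jc. Qed.

Lemma mem_B3 j : (j \in B3) = [|| j == a, j == b | j == c].
Proof. by rewrite !inE. Qed.

Lemma eq_mk (X : {set 'I_n}) p q r :
  (a \in X) = p -> (b \in X) = q -> (c \in X) = r ->
  (forall j, j != a -> j != b -> j != c -> j \notin X) -> X = mk p q r.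
Proof.
move=> ha hb hc ho; apply/setP => j.
have [->|ja] := eqVneq j a; first by rewrite mem_mka.
have [->|jb] := eqVneq j b; first by rewrite mem_mkb.
have [->|jc] := eqVneq j c; first by rewrite mem_mkc.
by rewrite mem_mk_other // (negbTE (ho j ja jb jc)).
Qed.

Lemma mkI p1 q1 r1 p2 q2 r2 :
  mk p1 q1 r1 :&: mk p2 q2 r2 = mk (p1 && p2) (q1 && q2) (r1 && r2).
Proof.
apply: eq_mk; rewrite ?in_setI ?in_setU ?mem_mka ?mem_mkb ?mem_mkc //.
by move=> j ja jb jc; rewrite ?in_setI ?in_setU !mem_mk_other.
Qed.

Lemma mkU p1 q1 r1 p2 q2 r2 :
  mk p1 q1 r1 :|: mk p2 q2 r2 = mk (p1 || p2) (q1 || q2) (r1 || r2).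
Proof.
apply: eq_mk; rewrite ?in_setI ?in_setU ?mem_mka ?mem_mkb ?mem_mkc //.
by move=> j ja jb jc; rewrite ?in_setI ?in_setU !mem_mk_other.
Qed.

Lemma mkS (S : {set 'I_n}) : S :&: B3 = mk (a \in S) (b \in S) (c \in S).
Proof.
apply: eq_mk; rewrite ?inE ?eqxx ?eab ?eac ?eba ?ebc ?eca ?ecb ?andbT ?orbT //.
by move=> j ja jb jc; rewrite !inE (negbTE ja) (negbTE jb) (negbTE jc) andbF.
Qed.

Lemma B3mk : B3 = mk true true true.
Proof.
apply: eq_mk; rewrite ?inE ?eqxx ?orbT //.
by move=> j ja jb jc; rewrite !inE (negbTE ja) (negbTE jb) (negbTE jc).
Qed.

Lemma mk_sub p q r : mk p q r \subset B3.
Proof.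
apply/subsetP => j; have [->|ja] := eqVneq j a; first by rewrite !inE eqxx.
have [->|jb] := eqVneq j b; first by rewrite !inE eqxx orbT.
have [->|jc] := eqVneq j c; first by rewrite !inE eqxx !orbT.
by rewrite mem_mk_other.
Qed.

Lemma mk_le p q r p' q' r' : (p ==> p') -> (q ==> q') -> (r ==> r') ->
  mk p q r \subset mk p' q' r'.
Proof.
move=> h1 h2 h3; apply/setIidPl; rewrite mkI.
by move: h1 h2 h3; case: p; case: p'; case: q; case: q'; case: r; case: r'.
Qed.

Lemma prod3 (G : 'I_n -> R) : \prod_(j in B3) G j = G a * (G b * G c).
Proof.
rewrite /B3 big_setU1 /=; last by rewrite !inE eab eac.
by rewrite big_setU1 /= ?big_set1 // inE ebc.
Qed.

Lemma prod_mk (G : 'I_n -> R) p q r : \prod_(j in mk p q r) G j =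
  (if p then G a else 1) * ((if q then G b else 1) * (if r then G c else 1)).
Proof.
transitivity (\prod_(j in B3) (if j \in mk p q r then G j else 1)).
  rewrite -big_mkcondr; apply: eq_bigl => j.
  by case h: (j \in mk p q r); rewrite ?andbF ?andbT // (fintype.subsetP (mk_sub p q r) j h).
by rewrite prod3 mem_mka mem_mkb mem_mkc.
Qed.

Lemma subB_mk p q r : (B3 \subset mk p q r) = [&& p, q & r].
Proof. by rewrite /B3 !subUset !sub1set mem_mka mem_mkb mem_mkc. Qed.

Lemma card_B3 : #|B3| = 3%N.
Proof. by rewrite /B3 !cardsU1 cards1 !inE eab eac ebc. Qed.



Lemma ind_mk (T : {set 'I_n}) p q r : ind R (mk p q r) T =
  (if p then (a \in T)%:R else 1) * ((if q then (b \in T)%:R else 1) * (if r then (c \in T)%:R else 1)).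
Proof. by rewrite /ind prod_mk. Qed.

Lemma block3 (x : 'I_n -> R) (f : {set 'I_n} -> R) :
  mono_submod_on B3 f -> (forall j, 0 <= x j <= 1) -> exists t, block_good x B3 f t.
Proof.
case=> f0 [fmono fsub] hx.
have /andP[ha0 ha1] := hx a; have /andP[hb0 hb1] := hx b; have /andP[hc0 hc1] := hx c.
have hF0 : 0 <= f (mk false false false) := f0 _ (mk_sub _ _ _).
have s1 := fsub (mk true false false) (mk false true false) (mk_sub _ _ _) (mk_sub _ _ _); rewrite mkI mkU /= in s1.
have s2 := fsub (mk true false false) (mk false false true) (mk_sub _ _ _) (mk_sub _ _ _); rewrite mkI mkU /= in s2.
have s3 := fsub (mk false true false) (mk false false true) (mk_sub _ _ _) (mk_sub _ _ _); rewrite mkI mkU /= in s3.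
have s4 := fsub (mk true false true) (mk false true true) (mk_sub _ _ _) (mk_sub _ _ _); rewrite mkI mkU /= in s4.
have s5 := fsub (mk true true false) (mk false true true) (mk_sub _ _ _) (mk_sub _ _ _); rewrite mkI mkU /= in s5.
have s6 := fsub (mk true true false) (mk true false true) (mk_sub _ _ _) (mk_sub _ _ _); rewrite mkI mkU /= in s6.
have m1 := fmono _ _ (mk_sub false true true) (mk_sub true true true) (@mk_le false true true true true true isT isT isT).
have m2 := fmono _ _ (mk_sub true false true) (mk_sub true true true) (@mk_le true false true true true true isT isT isT).
have m3 := fmono _ _ (mk_sub true true false) (mk_sub true true true) (@mk_le true true false true true true isT isT isT).
have hpoly : forall S : {set 'I_n}, f (S :&: B3) = f (mk false false false) + (f (mk true false false) - f (mk false false false)) * (a \in S)%:R + (f (mk false true false) - f (mk false false false)) * (b \in S)%:R + (f (mk false false true) - f (mk false false false)) * (c \in S)%:R + (f (mk true true false) - f (mk true false false) - f (mk false true false) + f (mk false false false)) * ((a \in S)%:R * (b \in S)%:R) + (f (mk true false true) - f (mk true false false) - f (mk false false true) + f (mk false false false)) * ((a \in S)%:R * (c \in S)%:R) + (f (mk false true true) - f (mk false true false) - f (mk false false true) + f (mk false false false)) * ((b \in S)%:R * (c \in S)%:R) + (f (mk true true true) - f (mk true true false) - f (mk true false true) - f (mk false true true) + f (mk true false false) + f (mk false true false) + f (mk false false true) - f (mk false false false)) * ((a \in S)%:R * ((b \in S)%:R * (c \in S)%:R)).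
  move=> S; rewrite mkS; case: (a \in S); case: (b \in S); case: (c \in S); rewrite /=; ring.
have dP0 : 0 <= Num.min (Num.min (Num.min ((1 - x a) * ((1 - x b) * (1 - x c))) (x a * (x b * (1 - x c)))) (x a * ((1 - x b) * x c))) ((1 - x a) * (x b * x c)).
  by rewrite !le_min !mulr_ge0 // ?subr_ge0.
have dM0 : 0 <= Num.min (Num.min (Num.min (x a * (x b * x c)) (x a * ((1 - x b) * (1 - x c)))) ((1 - x a) * (x b * (1 - x c)))) ((1 - x a) * ((1 - x b) * x c)).
  by rewrite !le_min !mulr_ge0 // ?subr_ge0.
have dP1 : Num.min (Num.min (Num.min ((1 - x a) * ((1 - x b) * (1 - x c))) (x a * (x b * (1 - x c)))) (x a * ((1 - x b) * x c))) ((1 - x a) * (x b * x c)) <= (1 - x a) * ((1 - x b) * (1 - x c)) by rewrite !ge_min lexx ?orbT.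
have dP2 : Num.min (Num.min (Num.min ((1 - x a) * ((1 - x b) * (1 - x c))) (x a * (x b * (1 - x c)))) (x a * ((1 - x b) * x c))) ((1 - x a) * (x b * x c)) <= x a * (x b * (1 - x c)) by rewrite !ge_min lexx ?orbT.
have dP3 : Num.min (Num.min (Num.min ((1 - x a) * ((1 - x b) * (1 - x c))) (x a * (x b * (1 - x c)))) (x a * ((1 - x b) * x c))) ((1 - x a) * (x b * x c)) <= x a * ((1 - x b) * x c) by rewrite !ge_min lexx ?orbT.
have dP4 : Num.min (Num.min (Num.min ((1 - x a) * ((1 - x b) * (1 - x c))) (x a * (x b * (1 - x c)))) (x a * ((1 - x b) * x c))) ((1 - x a) * (x b * x c)) <= (1 - x a) * (x b * x c) by rewrite !ge_min lexx ?orbT.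
have dM1 : Num.min (Num.min (Num.min (x a * (x b * x c)) (x a * ((1 - x b) * (1 - x c)))) ((1 - x a) * (x b * (1 - x c)))) ((1 - x a) * ((1 - x b) * x c)) <= x a * (x b * x c) by rewrite !ge_min lexx ?orbT.
have dM2 : Num.min (Num.min (Num.min (x a * (x b * x c)) (x a * ((1 - x b) * (1 - x c)))) ((1 - x a) * (x b * (1 - x c)))) ((1 - x a) * ((1 - x b) * x c)) <= x a * ((1 - x b) * (1 - x c)) by rewrite !ge_min lexx ?orbT.
have dM3 : Num.min (Num.min (Num.min (x a * (x b * x c)) (x a * ((1 - x b) * (1 - x c)))) ((1 - x a) * (x b * (1 - x c)))) ((1 - x a) * ((1 - x b) * x c)) <= (1 - x a) * (x b * (1 - x c)) by rewrite !ge_min lexx ?orbT.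
have dM4 : Num.min (Num.min (Num.min (x a * (x b * x c)) (x a * ((1 - x b) * (1 - x c)))) ((1 - x a) * (x b * (1 - x c)))) ((1 - x a) * ((1 - x b) * x c)) <= (1 - x a) * ((1 - x b) * x c) by rewrite !ge_min lexx ?orbT.
exists (if 0 <= (f (mk true true true) - f (mk true true false) - f (mk true false true) - f (mk false true true) + f (mk true false false) + f (mk false true false) + f (mk false false true) - f (mk false false false)) then Num.min (Num.min (Num.min ((1 - x a) * ((1 - x b) * (1 - x c))) (x a * (x b * (1 - x c)))) (x a * ((1 - x b) * x c))) ((1 - x a) * (x b * x c)) else - (Num.min (Num.min (Num.min (x a * (x b * x c)) (x a * ((1 - x b) * (1 - x c)))) ((1 - x a) * (x b * (1 - x c)))) ((1 - x a) * ((1 - x b) * x c)))).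
set t := (if 0 <= (f (mk true true true) - f (mk true true false) - f (mk true false true) - f (mk false true true) + f (mk true false false) + f (mk false true false) + f (mk false false true) - f (mk false false false)) then _ else _).
split; first by rewrite card_B3.
split.
  move=> T _; rewrite /gB !prod3 /pr /sg /t.
  by case: (a \in T); case: (b \in T); case: (c \in T); case: ifP => hz /=; lra.
move=> theta hth.
have hEg : \sum_(T : {set 'I_n} | T \subset B3) gB x t B3 T * f T = f (mk false false false) + (f (mk true false false) - f (mk false false false)) * x a + (f (mk false true false) - f (mk false false false)) * x b + (f (mk false false true) - f (mk false false false)) * x c + (f (mk true true false) - f (mk true false false) - f (mk false true false) + f (mk false false false)) * (x a * x b) + (f (mk true false true) - f (mk true false false) - f (mk false false true) + f (mk false false false)) * (x a * x c) + (f (mk false true true) - f (mk false true false) - f (mk false false true) + f (mk false false false)) * (x b * x c) + (f (mk true true true) - f (mk true true false) - f (mk true false true) - f (mk false true true) + f (mk true false false) + f (mk false true false) + f (mk false false true) - f (mk false false false)) * (x a * (x b * x c) + t).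
  transitivity (\sum_(T : {set 'I_n} | T \subset B3) gB x t B3 T * (f (mk false false false) * ind R (mk false false false) T + (f (mk true false false) - f (mk false false false)) * ind R (mk true false false) T + (f (mk false true false) - f (mk false false false)) * ind R (mk false true false) T + (f (mk false false true) - f (mk false false false)) * ind R (mk false false true) T + (f (mk true true false) - f (mk true false false) - f (mk false true false) + f (mk false false false)) * ind R (mk true true false) T + (f (mk true false true) - f (mk true false false) - f (mk false false true) + f (mk false false false)) * ind R (mk true false true) T + (f (mk false true true) - f (mk false true false) - f (mk false false true) + f (mk false false false)) * ind R (mk false true true) T + (f (mk true true true) - f (mk true true false) - f (mk true false true) - f (mk false true true) + f (mk true false false) + f (mk false true false) + f (mk false false true) - f (mk false false false)) * ind R (mk true true true) T)).
    apply: eq_bigr => T hT; congr (_ * _).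
    have -> : f T = f (T :&: B3) by rewrite (setIidPl hT).
    by rewrite hpoly !ind_mk /=; ring.
  under eq_bigr do rewrite !mulrDr; rewrite !big_split /= !G3 ?mk_sub // !prod_mk !subB_mk /=; ring.
rewrite hEg.
case: (lerP 0 (f (mk true true true) - f (mk true true false) - f (mk true false true) - f (mk false true true) + f (mk true false false) + f (mk false true false) + f (mk false false true) - f (mk false false false))) => hz.
  have ht : t = Num.min (Num.min (Num.min ((1 - x a) * ((1 - x b) * (1 - x c))) (x a * (x b * (1 - x c)))) (x a * ((1 - x b) * x c))) ((1 - x a) * (x b * x c)) by rewrite /t hz.
  have hw1 : 0 <= (f (mk true false true) + f (mk false true true) - f (mk true true true) - f (mk false false true)) by lra.
  have hw2 : 0 <= (f (mk true true false) + f (mk false true true) - f (mk true true true) - f (mk false true false)) by lra.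
  have hw3 : 0 <= (f (mk true true false) + f (mk true false true) - f (mk true true true) - f (mk true false false)) by lra.
  have hzc : 0 <= (f (mk true true true) - f (mk true true false) - f (mk true false true) - f (mk false true true) + f (mk true false false) + f (mk false true false) + f (mk false false true) - f (mk false false false)) by [].
  have hpt : forall S : {set 'I_n}, f (S :&: B3) <= f (mk false false false) + (f (mk true true true) - f (mk false true true)) * (a \in S)%:R + (f (mk true true true) - f (mk true false true)) * (b \in S)%:R + (f (mk true true true) - f (mk true true false)) * (c \in S)%:R + (f (mk true false true) + f (mk false true true) - f (mk true true true) - f (mk false false true)) * (if x a + x b <= 1 then (a \in S)%:R + (b \in S)%:R else 1) + (f (mk true true false) + f (mk false true true) - f (mk true true true) - f (mk false true false)) * (if x a + x c <= 1 then (a \in S)%:R + (c \in S)%:R else 1) + (f (mk true true false) + f (mk true false true) - f (mk true true true) - f (mk true false false)) * (if x b + x c <= 1 then (b \in S)%:R + (c \in S)%:R else 1) + (f (mk true true true) - f (mk true true false) - f (mk true false true) - f (mk false true true) + f (mk true false false) + f (mk false true false) + f (mk false false true) - f (mk false false false)) * (if x a + x b + x c <= 1 then (a \in S)%:R + (b \in S)%:R + (c \in S)%:R else 1).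
    move=> S; rewrite hpoly.
    have o1 := ler_wpM2l hw1 (or2_le R (a \in S) (b \in S) (x a + x b <= 1)).
    have o2 := ler_wpM2l hw2 (or2_le R (a \in S) (c \in S) (x a + x c <= 1)).
    have o3 := ler_wpM2l hw3 (or2_le R (b \in S) (c \in S) (x b + x c <= 1)).
    have o4 := ler_wpM2l hzc (or3_le R (a \in S) (b \in S) (c \in S) (x a + x b + x c <= 1)).
    have e : f (mk false false false) + (f (mk true false false) - f (mk false false false)) * (a \in S)%:R + (f (mk false true false) - f (mk false false false)) * (b \in S)%:R + (f (mk false false true) - f (mk false false false)) * (c \in S)%:R + (f (mk true true false) - f (mk true false false) - f (mk false true false) + f (mk false false false)) * ((a \in S)%:R * (b \in S)%:R) + (f (mk true false true) - f (mk true false false) - f (mk false false true) + f (mk false false false)) * ((a \in S)%:R * (c \in S)%:R) + (f (mk false true true) - f (mk false true false) - f (mk false false true) + f (mk false false false)) * ((b \in S)%:R * (c \in S)%:R) + (f (mk true true true) - f (mk true true false) - f (mk true false true) - f (mk false true true) + f (mk true false false) + f (mk false true false) + f (mk false false true) - f (mk false false false)) * ((a \in S)%:R * ((b \in S)%:R * (c \in S)%:R)) = f (mk false false false) + (f (mk true true true) - f (mk false true true)) * (a \in S)%:R + (f (mk true true true) - f (mk true false true)) * (b \in S)%:R + (f (mk true true true) - f (mk true true false)) * (c \in S)%:R + (f (mk true false true) + f (mk false true true) - f (mk true true true) - f (mk false false true)) * ((a \in S)%:R + (b \in S)%:R - (a \in S)%:R * (b \in S)%:R) + (f (mk true true false)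 + f (mk false true true) - f (mk true true true) - f (mk false true false)) * ((a \in S)%:R + (c \in S)%:R - (a \in S)%:R * (c \in S)%:R) + (f (mk true true false) + f (mk true false true) - f (mk true true true) - f (mk true false false)) * ((b \in S)%:R + (c \in S)%:R - (b \in S)%:R * (c \in S)%:R) + (f (mk true true true) - f (mk true true false) - f (mk true false true) - f (mk false true true) + f (mk true false false) + f (mk false true false) + f (mk false false true) - f (mk false false false)) * ((a \in S)%:R + (b \in S)%:R + (c \in S)%:R - (a \in S)%:R * (b \in S)%:R - (a \in S)%:R * (c \in S)%:R - (b \in S)%:R * (c \in S)%:R + (a \in S)%:R * ((b \in S)%:R * (c \in S)%:R)) by ring.
    by rewrite e; apply: lerD (lerD (lerD (lerD (lexx _) o1) o2) o3) o4.
  apply: le_trans (E_mono hth hpt) _.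
  under eq_bigr do rewrite !mulrDr; rewrite !big_split /= (E_const hth) ?(E_ku hth) ?(E_kM2 hth) ?(E_kM3 hth).
  have p1 := ler_wpM2l hw1 (P2 (hx a) (hx b)).
  have p2 := ler_wpM2l hw2 (P2 (hx a) (hx c)).
  have p3 := ler_wpM2l hw3 (P2 (hx b) (hx c)).
  have p4 := ler_wpM2l hzc (P3 (hx a) (hx b) (hx c)).
  have c1 : 0 <= (f (mk true true true) - f (mk false true true)) * x a by apply: mulr_ge0 => //; lra.
  have c2 : 0 <= (f (mk true true true) - f (mk true false true)) * x b by apply: mulr_ge0 => //; lra.
  have c3 : 0 <= (f (mk true true true) - f (mk true true false)) * x c by apply: mulr_ge0 => //; lra.
  rewrite ht; lra.
have ht : t = - (Num.min (Num.min (Num.min (x a * (x b * x c)) (x a * ((1 - x b) * (1 - x c)))) ((1 - x a) * (x b * (1 - x c)))) ((1 - x a) * ((1 - x b) * x c))) by rewrite /t lt_geF.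
  have hw1 : 0 <= (- (f (mk true true false) - f (mk true false false) - f (mk false true false) + f (mk false false false))) by lra.
  have hw2 : 0 <= (- (f (mk true false true) - f (mk true false false) - f (mk false false true) + f (mk false false false))) by lra.
  have hw3 : 0 <= (- (f (mk false true true) - f (mk false true false) - f (mk false false true) + f (mk false false false))) by lra.
  have hzc : 0 <= - (f (mk true true true) - f (mk true true false) - f (mk true false true) - f (mk false true true) + f (mk true false false) + f (mk false true false) + f (mk false false true) - f (mk false false false)) by lra.
  have hpt : forall S : {set 'I_n}, f (S :&: B3) <= f (mk false false false) + (f (mk true true true) - f (mk false true true)) * (a \in S)%:R + (f (mk true true true) - f (mk true false true)) * (b \in S)%:R + (f (mk true true true) - f (mk true true false)) * (c \in S)%:R + (- (f (mk true true false) - f (mk true false false) - f (mk false true false) + f (mk false false false))) * (if x a + x b <= 1 then (a \in S)%:R + (b \in S)%:R else 1) + (- (f (mk true false true) - f (mk true false false) - f (mk false false true) + f (mk false false false))) * (if x a + x c <= 1 then (a \in S)%:R + (c \in S)%:R else 1) + (- (f (mk false true true) - f (mk false true false) - f (mk false false true) + f (mk false false false))) * (if x b + x c <= 1 then (b \in S)%:R + (c \in S)%:R else 1) + (- (f (mk true true true) - f (mk true true false) - f (mk true false true) - f (mk false true true) + f (mk true false false) + f (mk false true false) + f (mk false false true) - f (mk false false false))) * (if x a + x b + x c <= 2 then (a \in S)%:R + (b \in S)%:R + (c \in S)%:R else 2).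
    move=> S; rewrite hpoly.
    have o1 := ler_wpM2l hw1 (or2_le R (a \in S) (b \in S) (x a + x b <= 1)).
    have o2 := ler_wpM2l hw2 (or2_le R (a \in S) (c \in S) (x a + x c <= 1)).
    have o3 := ler_wpM2l hw3 (or2_le R (b \in S) (c \in S) (x b + x c <= 1)).
    have o4 := ler_wpM2l hzc (r_le R (a \in S) (b \in S) (c \in S) (x a + x b + x c <= 2)).
    have e : f (mk false false false) + (f (mk true false false) - f (mk false false false)) * (a \in S)%:R + (f (mk false true false) - f (mk false false false)) * (b \in S)%:R + (f (mk false false true) - f (mk false false false)) * (c \in S)%:R + (f (mk true true false) - f (mk true false false) - f (mk false true false) + f (mk false false false)) * ((a \in S)%:R * (b \in S)%:R) + (f (mk true false true) - f (mk true false false) - f (mk false false true) + f (mk false false false)) * ((a \in S)%:R * (c \in S)%:R) + (f (mk false true true) - f (mk false true false) - f (mk false false true) + f (mk false false false)) * ((b \in S)%:R * (c \in S)%:R) + (f (mk true true true) - f (mk true true false) - f (mk true false true) - f (mk false true true) + f (mk true false false) + f (mk false true false) + f (mk false false true) - f (mk false false false)) * ((a \in S)%:R * ((b \in S)%:R * (c \in S)%:R)) = f (mk false false false) + (f (mk true true true) - f (mk false true true)) * (a \in S)%:R + (f (mk true true true) - f (mk true false true)) * (b \in S)%:R + (f (mk true true true) - f (mk true true false)) * (c \in S)%:R + (- (f (mk true true false) - f (mk true false false) - f (mk false true false) + f (mk false false false))) * ((a \in S)%:R + (b \in S)%:R - (a \in S)%:R * (b \in S)%:R) + (- (f (mk true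 false true) - f (mk true false false) - f (mk false false true) + f (mk false false false))) * ((a \in S)%:R + (c \in S)%:R - (a \in S)%:R * (c \in S)%:R) + (- (f (mk false true true) - f (mk false true false) - f (mk false false true) + f (mk false false false))) * ((b \in S)%:R + (c \in S)%:R - (b \in S)%:R * (c \in S)%:R) + (- (f (mk true true true) - f (mk true true false) - f (mk true false true) - f (mk false true true) + f (mk true false false) + f (mk false true false) + f (mk false false true) - f (mk false false false))) * ((a \in S)%:R + (b \in S)%:R + (c \in S)%:R - (a \in S)%:R * ((b \in S)%:R * (c \in S)%:R)) by ring.
    by rewrite e; apply: lerD (lerD (lerD (lerD (lexx _) o1) o2) o3) o4.
  apply: le_trans (E_mono hth hpt) _.
  under eq_bigr do rewrite !mulrDr; rewrite !big_split /= (E_const hth) ?(E_ku hth) ?(E_kM2 hth) ?(E_kM3 hth).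
  have p1 := ler_wpM2l hw1 (P2 (hx a) (hx b)).
  have p2 := ler_wpM2l hw2 (P2 (hx a) (hx c)).
  have p3 := ler_wpM2l hw3 (P2 (hx b) (hx c)).
  have p4 := ler_wpM2l hzc (PR (hx a) (hx b) (hx c)).
  have c1 : 0 <= (f (mk true true true) - f (mk false true true)) * x a by apply: mulr_ge0 => //; lra.
  have c2 : 0 <= (f (mk true true true) - f (mk true false true)) * x b by apply: mulr_ge0 => //; lra.
  have c3 : 0 <= (f (mk true true true) - f (mk true true false)) * x c by apply: mulr_ge0 => //; lra.
  rewrite ht; exact: (final_neg hF0 p1 p2 p3 p4 c1 c2 c3).
Qed.
End Three.

Section Two.
Variables (R : realType) (n : nat) (a b : 'I_n).
Hypothesis (hab : a != b).

Definition mk2 (p q : bool) : {set 'I_n} :=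
  [set j | ((j == a) && p) || ((j == b) && q)].
Definition B2 : {set 'I_n} := a |: [set b].

Let eab : (a == b) = false. Proof. exact: negbTE hab. Qed.
Let eba : (b == a) = false. Proof. by rewrite eq_sym. Qed.

Lemma mem_mk2a p q : (a \in mk2 p q) = p.
Proof. by rewrite inE eqxx eab; case: p. Qed.
Lemma mem_mk2b p q : (b \in mk2 p q) = q.
Proof. by rewrite inE eqxx eba; case: q; rewrite ?orbT ?orbF. Qed.
Lemma mem_mk2_other j p q : j != a -> j != b -> (j \in mk2 p q) = false.
Proof. by move=> /negbTE ja /negbTE jb; rewrite inE ja jb. Qed.

Lemma eq_mk2 (X : {set 'I_n}) p q :
  (a \in X) = p -> (b \in X) = q ->
  (forall j, j != a -> j != b -> j \notin X) -> X = mk2 p q.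
Proof.
move=> ha hb ho; apply/setP => j.
have [->|ja] := eqVneq j a; first by rewrite mem_mk2a.
have [->|jb] := eqVneq j b; first by rewrite mem_mk2b.
by rewrite mem_mk2_other // (negbTE (ho j ja jb)).
Qed.

Lemma mk2I p1 q1 p2 q2 : mk2 p1 q1 :&: mk2 p2 q2 = mk2 (p1 && p2) (q1 && q2).
Proof.
apply: eq_mk2; rewrite ?in_setI ?mem_mk2a ?mem_mk2b //.
by move=> j ja jb; rewrite in_setI !mem_mk2_other.
Qed.

Lemma mk2U p1 q1 p2 q2 : mk2 p1 q1 :|: mk2 p2 q2 = mk2 (p1 || p2) (q1 || q2).
Proof.
apply: eq_mk2; rewrite ?in_setU ?mem_mk2a ?mem_mk2b //.
by move=> j ja jb; rewrite in_setU !mem_mk2_other.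
Qed.

Lemma mk2S (S : {set 'I_n}) : S :&: B2 = mk2 (a \in S) (b \in S).
Proof.
apply: eq_mk2; rewrite ?inE ?eqxx ?eab ?eba ?andbT ?orbT //.
by move=> j ja jb; rewrite !inE (negbTE ja) (negbTE jb) andbF.
Qed.

Lemma mk2_sub p q : mk2 p q \subset B2.
Proof.
apply/subsetP => j; have [->|ja] := eqVneq j a; first by rewrite !inE eqxx.
have [->|jb] := eqVneq j b; first by rewrite !inE eqxx orbT.
by rewrite mem_mk2_other.
Qed.

Lemma mk2_le p q p' q' : (p ==> p') -> (q ==> q') -> mk2 p q \subset mk2 p' q'.
Proof.
move=> h1 h2; apply/setIidPl; rewrite mk2I.
by move: h1 h2; case: p; case: p'; case: q; case: q'.
Qed.

Lemma prod2 (G : 'I_n -> R) : \prod_(j in B2) G j = G a * G b.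
Proof. by rewrite /B2 big_setU1 /= ?big_set1 // inE eab. Qed.

Lemma prod_mk2 (G : 'I_n -> R) p q : \prod_(j in mk2 p q) G j =
  (if p then G a else 1) * (if q then G b else 1).
Proof.
transitivity (\prod_(j in B2) (if j \in mk2 p q then G j else 1)).
  rewrite -big_mkcondr; apply: eq_bigl => j.
  by case h: (j \in mk2 p q); rewrite ?andbF ?andbT // (fintype.subsetP (mk2_sub p q) j h).
by rewrite prod2 mem_mk2a mem_mk2b.
Qed.

Lemma card_B2 : #|B2| = 2%N.
Proof. by rewrite /B2 cardsU1 cards1 !inE eab. Qed.

Lemma ind_mk2 (T : {set 'I_n}) p q : ind R (mk2 p q) T =
  (if p then (a \in T)%:R else 1) * (if q then (b \in T)%:R else 1).
Proof. by rewrite /ind prod_mk2. Qed.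

Lemma block2 (x : 'I_n -> R) (f : {set 'I_n} -> R) :
  mono_submod_on B2 f -> (forall j, 0 <= x j <= 1) -> exists t, block_good x B2 f t.
Proof.
case=> f0 [fmono fsub] hx.
have /andP[ha0 ha1] := hx a; have /andP[hb0 hb1] := hx b.
have hF0 : 0 <= f (mk2 false false) := f0 _ (mk2_sub _ _).
have s1 := fsub (mk2 true false) (mk2 false true) (mk2_sub _ _) (mk2_sub _ _).
rewrite mk2I mk2U /= in s1.
have m1 := fmono _ _ (mk2_sub false true) (mk2_sub true true) (@mk2_le false true true true isT isT).
have m2 := fmono _ _ (mk2_sub true false) (mk2_sub true true) (@mk2_le true false true true isT isT).
have hpoly : forall S : {set 'I_n}, f (S :&: B2) =
    f (mk2 false false) + (f (mk2 true false) - f (mk2 false false)) * (a \in S)%:R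
    + (f (mk2 false true) - f (mk2 false false)) * (b \in S)%:R
    + (f (mk2 true true) - f (mk2 true false) - f (mk2 false true) + f (mk2 false false))
      * ((a \in S)%:R * (b \in S)%:R).
  by move=> S; rewrite mk2S; case: (a \in S); case: (b \in S); rewrite /=; ring.
exists 0.
split; first by rewrite card_B2.
split.
  move=> T _; rewrite /gB !prod2 /pr mul0r addr0.
  by case: (a \in T); case: (b \in T); rewrite /=; apply: mulr_ge0; lra.
move=> theta hth.
have hEg : \sum_(T : {set 'I_n} | T \subset B2) gB x 0 B2 T * f T =
    f (mk2 false false) + (f (mk2 true false) - f (mk2 false false)) * x a
    + (f (mk2 false true) - f (mk2 false false)) * x b
    + (f (mk2 true true) - f (mk2 true false) - f (mk2 false true) + f (mk2 false false))
      * (x a * x b).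
  transitivity (\sum_(T : {set 'I_n} | T \subset B2) gB x 0 B2 T *
    (f (mk2 false false) * ind R (mk2 false false) T
    + (f (mk2 true false) - f (mk2 false false)) * ind R (mk2 true false) T
    + (f (mk2 false true) - f (mk2 false false)) * ind R (mk2 false true) T
    + (f (mk2 true true) - f (mk2 true false) - f (mk2 false true) + f (mk2 false false))
      * ind R (mk2 true true) T)).
    apply: eq_bigr => T hT; congr (_ * _).
    have -> : f T = f (T :&: B2) by rewrite (setIidPl hT).
    by rewrite hpoly !ind_mk2 /=; ring.
  under eq_bigr do rewrite !mulrDr; rewrite !big_split /= !G3 ?mk2_sub // !prod_mk2 /=; ring.
rewrite hEg.
have hw : 0 <= f (mk2 true false) + f (mk2 false true) - f (mk2 true true) - f (mk2 false false) by lra.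
have hpt : forall S : {set 'I_n}, f (S :&: B2) <=
    f (mk2 false false) + (f (mk2 true true) - f (mk2 false true)) * (a \in S)%:R
    + (f (mk2 true true) - f (mk2 true false)) * (b \in S)%:R
    + (f (mk2 true false) + f (mk2 false true) - f (mk2 true true) - f (mk2 false false))
      * (if x a + x b <= 1 then (a \in S)%:R + (b \in S)%:R else 1).
  move=> S; rewrite hpoly.
  have o1 := ler_wpM2l hw (or2_le R (a \in S) (b \in S) (x a + x b <= 1)).
  have e : f (mk2 false false) + (f (mk2 true false) - f (mk2 false false)) * (a \in S)%:R
    + (f (mk2 false true) - f (mk2 false false)) * (b \in S)%:R
    + (f (mk2 true true) - f (mk2 true false) - f (mk2 false true) + f (mk2 false false))
      * ((a \in S)%:R * (b \in S)%:R) =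
    f (mk2 false false) + (f (mk2 true true) - f (mk2 false true)) * (a \in S)%:R
    + (f (mk2 true true) - f (mk2 true false)) * (b \in S)%:R
    + (f (mk2 true false) + f (mk2 false true) - f (mk2 true true) - f (mk2 false false))
      * ((a \in S)%:R + (b \in S)%:R - (a \in S)%:R * (b \in S)%:R) by ring.
  by rewrite e; apply: lerD (lexx _) o1.
apply: le_trans (E_mono hth hpt) _.
under eq_bigr do rewrite !mulrDr; rewrite !big_split /= (E_const hth) ?(E_ku hth) ?(E_kM2 hth).
have p1 := ler_wpM2l hw (P2 (hx a) (hx b)).
have c1 : 0 <= (f (mk2 true true) - f (mk2 false true)) * x a by apply: mulr_ge0 => //; lra.
have c2 : 0 <= (f (mk2 true true) - f (mk2 true false)) * x b by apply: mulr_ge0 => //; lra.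
lra.
Qed.

End Two.

Lemma block1 (R : realType) (n : nat) (x : 'I_n -> R) (a : 'I_n) (f : {set 'I_n} -> R) :
  mono_submod_on [set a] f -> (forall j, 0 <= x j <= 1) -> exists t, block_good x [set a] f t.
Proof.
case=> f0 [fmono fsub] hx.
have /andP[ha0 ha1] := hx a.
have hF0 : 0 <= f set0 := f0 _ (sub0set _).
have hFa : 0 <= f [set a] := f0 _ (subxx _).
have hS : forall S : {set 'I_n}, f (S :&: [set a]) =
    f set0 + (f [set a] - f set0) * (a \in S)%:R.
  move=> S; case haS: (a \in S) => /=.
    by rewrite (setIidPr _) ?sub1set // mulr1 addrC subrK.
  have -> : S :&: [set a] = set0.
    by apply/setP => j; rewrite !inE; case: (eqVneq j a) => [->|]; rewrite ?haS ?andbF.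
  by rewrite mulr0 addr0.
exists 0.
split; first by rewrite cards1.
split.
  by move=> T _; rewrite /gB big_set1 mul0r addr0 /pr; case: (a \in T); lra.
move=> theta hth.
have hEg : \sum_(T : {set 'I_n} | T \subset [set a]) gB x 0 [set a] T * f T =
    f set0 + (f [set a] - f set0) * x a.
  transitivity (\sum_(T : {set 'I_n} | T \subset [set a]) gB x 0 [set a] T *
    (f set0 * ind R set0 T + (f [set a] - f set0) * ind R [set a] T)).
    apply: eq_bigr => T hT; congr (_ * _).
    have -> : f T = f (T :&: [set a]) by rewrite (setIidPl hT).
    by rewrite hS /ind big_set0 big_set1 mulr1.
  under eq_bigr do rewrite !mulrDr; rewrite !big_split /= !G3 ?sub0set ?subxx //.
  by rewrite big_set0 big_set1 !mul0r !addr0 mulr1.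
rewrite hEg.
under eq_bigr do rewrite hS mulrDr; rewrite big_split /= (E_const hth) (E_ku hth).
have : 0 <= f set0 + (f [set a] - f set0) * x a by nra.
lra.
Qed.

Lemma block_lemma (R : realType) (n : nat) (x : 'I_n -> R) (B : {set 'I_n})
  (f : {set 'I_n} -> R) :
  (1 <= #|B| <= 3)%N -> mono_submod_on B f -> (forall j, 0 <= x j <= 1) ->
  exists t, block_good x B f t.
Proof.
move=> /andP[h1 h3] hf hx.
have [a ha] : exists a, a \in B by apply/card_gt0P.
have hc := cardsD1 a B; rewrite ha add1n in hc.
case: (ltngtP #|B| 2) => h2.
- have /cards1P [a' eB] : #|B| == 1%N by apply/eqP; lia.
  rewrite eB in hf *; exact: block1.
- have /cards2P [b [c [hbc hBD]]] : #|B :\ a| == 2%N by apply/eqP; lia.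
  have hb : b \in B :\ a by rewrite hBD !inE eqxx.
  have hc' : c \in B :\ a by rewrite hBD !inE eqxx orbT.
  have hab : a != b by move: hb; rewrite !inE eq_sym => /andP[].
  have hac : a != c by move: hc'; rewrite !inE eq_sym => /andP[].
  have eB : B = B3 a b c by rewrite /B3 -hBD setD1K.
  rewrite eB in hf *; exact: block3.
- have /cards2P [a' [b [hab eB]]] : #|B| == 2%N by rewrite h2.
  rewrite eB in hf *; exact: block2.
Qed.
Theorem mainTheorem10 (R : realType) (n m : nat) (blk : 'I_n -> 'I_m)
    (fi : 'I_m -> {set 'I_n} -> R)
    (hsize : forall i : 'I_m, (1 <= #|block blk i| <= 3)%N)
    (hf : forall i : 'I_m, mono_submod_on (block blk i) (fi i))
    (x : 'I_n -> R) (hx : forall j, 0 <= x j <= 1) :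
  let f := fun S : {set 'I_n} => \sum_(i < m) fi i (S :&: block blk i) in
  concave_closure f x <= 4 / 3 * upper_pairwise_ext f x.
Proof.
cbv zeta; set f := (fun S : {set 'I_n} => _).
have /fin_all_exists [t ht] : forall k : 'I_m, exists t0 : R,
    block_good x (block blk k) (fi k) t0.
  by move=> k; apply: block_lemma.
pose th := [ffun S : {set 'I_n} =>
  \prod_(k < m) gB x (t k) (block blk k) (S :&: block blk k)].
have thge0 : forall S, 0 <= th S.
  move=> S; rewrite ffunE; apply: prodr_ge0 => k _; apply: (ht k).2.1.
  exact: subsetIr.
have thind : forall L : {set 'I_n}, (#|L| <= 2)%N ->
    \sum_(S : {set 'I_n}) th S * ind R L S = \prod_(l in L) x l.
  move=> L hL.
  transitivity (\sum_(S : {set 'I_n}) \prod_(k < m)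
     (gB x (t k) (block blk k) (S :&: block blk k) *
      ind R (L :&: block blk k) (S :&: block blk k))).
    by apply: eq_bigr => S _; rewrite ffunE (@ind_blocks R n m blk L S) -big_split.
  rewrite (@prod_blocks R n m blk (fun k T => gB x (t k) (block blk k) T *
      ind R (L :&: block blk k) T)) (prodx_blocks blk); apply: eq_bigr => k _.
  rewrite BS ?subsetIr //.
  case: (ltnP #|block blk k| 3) => hk; first by rewrite ((ht k).1 hk) mul0r addr0.
  have -> : (block blk k \subset L :&: block blk k) = false.
    apply/negbTE/negP => hs.
    have h1 := subset_leq_card hs.
    have h2 := subset_leq_card (subsetIl L (block blk k)).
    have := leq_trans hk (leq_trans h1 (leq_trans h2 hL)).
    by [].
  by rewrite mulr0 addr0.
have thsum : \sum_(S : {set 'I_n}) th S = 1.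
  have := thind set0; rewrite cards0 => /(_ isT); rewrite big_set0 => <-.
  by apply: eq_bigr => S _; rewrite /ind big_set0 mulr1.
have thmarg : forall j, \sum_(S : {set 'I_n} | j \in S) th S = x j.
  move=> j; have := thind [set j]; rewrite cards1 => /(_ isT); rewrite big_set1 => <-.
  rewrite big_mkcond; apply: eq_bigr => S _; rewrite /ind big_set1.
  by case: (j \in S); rewrite /= ?mulr1 ?mulr0.
have thpair : forall i j : 'I_n, (i < j)%N ->
    \sum_(S : {set 'I_n} | (i \in S) && (j \in S)) th S = x i * x j.
  move=> i j hij; have hne : i != j by rewrite neq_ltn hij.
  have hni : i \notin [set j] by rewrite inE.
  have := thind [set i; j]; rewrite cards2 hne => /(_ isT).
  rewrite big_setU1 //= big_set1 => <-.
  rewrite big_mkcond; apply: eq_bigr => S _; rewrite /ind big_setU1 //= big_set1.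
  by case: (i \in S); case: (j \in S); rewrite /= ?mulr1 ?mulr0 ?mul0r.
have thfeas : pair_feasible x th.
  by split; [split; [exact: thge0 | split; [exact: thsum | exact: thmarg]] | exact: thpair].
have thval : \sum_(S : {set 'I_n}) th S * f S =
    \sum_(k < m) \sum_(T : {set 'I_n} | T \subset block blk k) gB x (t k) (block blk k) T * fi k T.
  rewrite /f; under eq_bigr do rewrite mulr_sumr; rewrite exchange_big; apply: eq_bigr => k _.
  transitivity (\sum_(S : {set 'I_n}) \prod_(l < m)
     (gB x (t l) (block blk l) (S :&: block blk l) *
      (if l == k then fi k (S :&: block blk l) else 1))).
    apply: eq_bigr => S _; rewrite big_split /= ffunE; congr (_ * _).
    by rewrite (bigD1 k) //= eqxx big1 ?mulr1 // => l /negbTE ->.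
  rewrite (@prod_blocks R n m blk (fun l T => gB x (t l) (block blk l) T *
      (if l == k then fi k T else 1))) (bigD1 k) //= [X in _ * X]big1 ?mulr1.
    by apply: eq_bigr => T _; rewrite eqxx.
  move=> l /negbTE hl; under eq_bigr do rewrite hl mulr1.
  by apply: gsum1; case/andP: (hsize l).
have key : forall theta, marg_feasible x theta ->
    \sum_(S : {set 'I_n}) theta S * f S <= 4 / 3 * \sum_(S : {set 'I_n}) th S * f S.
  move=> theta hth; rewrite thval mulr_sumr /f.
  under eq_bigr do rewrite mulr_sumr.
  rewrite exchange_big; apply: ler_sum => k _; exact: (ht k).2.2 _ hth.
have fge0 : forall S, 0 <= f S.
  move=> S; apply: sumr_ge0 => k _; apply: (hf k).1; exact: subsetIr.
rewrite /concave_closure /upper_pairwise_ext.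
pose Bs := [set v | exists theta, pair_feasible x theta /\
   v = \sum_(S : {set 'I_n}) theta S * f S]%classic.
have BsV : Bs (\sum_(S : {set 'I_n}) th S * f S) by exists th.
have hub : has_ubound Bs.
  exists (\sum_(S : {set 'I_n}) f S) => v [th' [[[h0 [h1 _]] _] ->]].
  apply: ler_sum => S _; rewrite ler_piMl //.
  rewrite -h1 (bigD1 S) //= lerDl; apply: sumr_ge0 => ? _; exact: h0.
apply: ge_sup.
  by exists (\sum_(S : {set 'I_n}) th S * f S); exists th; split => //; exact: thfeas.1.
move=> v [th' [hth' ->]]; apply: le_trans (key th' hth') _.
apply: ler_wpM2l; [lra | exact: ub_le_sup hub _ BsV].
Qed.
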